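(* Assume $r>\mu$, $C-rK_O>0$, $C+rK_I>0$ and $K_I+K_O\ge0$. Then the equation \[ A(\lambda_2-\lambda_1)p^{\lambda_1}+\frac{e^{(\mu-r)\delta}}{r-\mu}(\lambda_2-1)p-\lambda_2e^{-r\delta}\left(\frac{C}{r}+K_I\right)=0 \] has exactly two solutions $p_1,p_2$ in $(0,+\infty)$, and they satisfy $p_1\le p_O$ and $p_2>p_O$. Furthermore, $\lambda_1Ap_2^{\lambda_1-1}+\frac{e^{(\mu-r)\delta}}{r-\mu}>0$.
   Context: Constants: $\mu\in\mathbb{R}$, $\sigma>0$, $r>0$, $C,K_I,K_O\in\mathbb{R}$, $\delta\ge0$. $\lambda_1<\lambda_2$ are the roots of $r-\mu\lambda-\frac12\sigma^2\lambda(\lambda-1)=0$ (so $\lambda_1<0$, $\lambda_2>1$ when $r>\mu$). $p_O:=e^{-\mu\delta}\frac{\lambda_1}{\lambda_1-1}(r-\mu)\left(\frac{C}{r}-K_O\right)$ and $A:=e^{(\mu-r)\delta}p_O^{1-\lambda_1}/(\lambda_1(\mu-r))$. *)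

(* Defs.v *)
From Stdlib Require Import Reals.
Open Scope R_scope.

Definition charq (mu sigma r l : R) : R :=
  r - mu * l - / 2 * sigma ^ 2 * l * (l - 1).

Definition pO (mu r C KO delta lam1 : R) : R :=
  exp (- mu * delta) * (lam1 / (lam1 - 1)) * (r - mu) * (C / r - KO).

Definition Acoef (mu r C KO delta lam1 : R) : R :=
  exp ((mu - r) * delta) * Rpower (pO mu r C KO delta lam1) (1 - lam1)
    / (lam1 * (mu - r)).

(* Left-hand side of the equation, for p > 0 (p^lam1 = Rpower p lam1). *)
Definition eqF (mu r C KI KO delta lam1 lam2 p : R) : R :=
  Acoef mu r C KO delta lam1 * (lam2 - lam1) * Rpower p lam1
  + exp ((mu - r) * delta) / (r - mu) * (lam2 - 1) * p
  - lam2 * exp (- r * delta) * (C / r + KI).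

(* Main.v *)
Require Import Defs.
From Stdlib Require Import Reals Lra Psatz.
From Coquelicot Require Import Coquelicot.
Open Scope R_scope.

Definition hh (m c D a t : R) := m * exp (a * t) + c * exp t - D.

Lemma hh_der (m c D a t : R) :
  derivable_pt_lim (hh m c D a) t (m * a * exp (a*t) + c * exp t).
Proof.
  apply is_derive_Reals. unfold hh. auto_derive; auto. ring.
Qed.

Lemma hh_cont (m c D a : R) : continuity (hh m c D a).
Proof.
  intro t. apply derivable_continuous_pt. exists (m * a * exp (a*t) + c * exp t).
  apply hh_der.
Qed.

Lemma hh_der_fac (m c a t : R) :
  m * a * exp (a*t) + c * exp t = exp t * (m * a * exp ((a-1)*t) + c).
Proof.
  replace (a*t) with (t + (a-1)*t) by ring. rewrite exp_plus. ring.
Qed.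

Lemma gen (m c D a tO : R) : a < 0 -> 0 < m -> 0 < c -> 0 < D ->
  hh m c D a tO <= 0 -> m*a*exp((a-1)*tO) + c < 0 ->
  exists t1 t2, t1 <= tO < t2 /\ hh m c D a t1 = 0 /\ hh m c D a t2 = 0 /\
   forall t, hh m c D a t = 0 -> t = t1 \/ t = t2.
Proof.
  intros Ha Hm Hc HD H0 H1.
  set (h := hh m c D a).
  assert (Hma : m * a < 0) by nra.
  set (ts := ln (c / (- (m*a))) / (a-1)).
  assert (Hts : exp ((a-1)*ts) = c / (-(m*a))).
  { unfold ts. replace ((a-1) * (ln (c / - (m * a)) / (a - 1))) with (ln (c / - (m * a))) by (field; lra).
    apply exp_ln. apply Rdiv_lt_0_compat; lra. }
  assert (Hneg : forall x, x < ts -> m * a * exp (a*x) + c * exp x < 0).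
  { intros x Hx. rewrite hh_der_fac.
    assert (exp ((a-1)*ts) < exp ((a-1)*x)) by (apply exp_increasing; nra).
    rewrite Hts in H.
    assert (m*a*exp((a-1)*x) < m*a*(c / - (m*a))) by nra.
    replace (m*a*(c / - (m*a))) with (-c) in H2 by (field; lra).
    assert (0 < exp x) by apply exp_pos. nra. }
  assert (Hpos : forall x, ts < x -> 0 < m * a * exp (a*x) + c * exp x).
  { intros x Hx. rewrite hh_der_fac.
    assert (exp ((a-1)*x) < exp ((a-1)*ts)) by (apply exp_increasing; nra).
    rewrite Hts in H.
    assert (m*a*(c / - (m*a)) < m*a*exp((a-1)*x)) by nra.
    replace (m*a*(c / - (m*a))) with (-c) in H2 by (field; lra).
    assert (0 < exp x) by apply exp_pos. nra. }
  assert (Hdec : forall x y, x < y -> y <= ts -> h y < h x).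
  { intros x y Hxy Hy.
    destruct (MVT_cor2 h (fun t => m * a * exp (a*t) + c * exp t) x y Hxy) as [z [Hz1 Hz2]].
    { intros; apply hh_der. }
    assert (m * a * exp (a*z) + c * exp z < 0) by (apply Hneg; lra). nra. }
  assert (Hinc : forall x y, x < y -> ts <= x -> h x < h y).
  { intros x y Hxy Hy.
    destruct (MVT_cor2 h (fun t => m * a * exp (a*t) + c * exp t) x y Hxy) as [z [Hz1 Hz2]].
    { intros; apply hh_der. }
    assert (0 < m * a * exp (a*z) + c * exp z) by (apply Hpos; lra). nra. }
  assert (HtO : tO < ts).
  { assert (exp ((a-1)*ts) < exp ((a-1)*tO)).
    { rewrite Hts. apply Rmult_lt_reg_l with (-(m*a)); [lra|].
      replace (- (m * a) * (c / - (m * a))) with c by (field; lra). nra. }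
    apply exp_lt_inv in H. nra. }
  set (tL := Rmin (tO - 1) (ln (D/m + 1) / a)).
  assert (HtL : tL < tO) by (unfold tL; pose proof (Rmin_l (tO-1) (ln (D/m+1)/a)); lra).
  assert (HhL : 0 < h tL).
  { unfold h, hh. assert (ln (D/m+1) <= a * tL).
    { assert (tL <= ln (D/m+1)/a) by apply Rmin_r.
      replace (ln (D/m+1)) with (a * (ln (D/m+1)/a)) by (field; lra). nra. }
    assert (exp (ln (D/m+1)) <= exp (a*tL)).
    { destruct (Req_dec (ln (D/m+1)) (a*tL)) as [E|E]; [rewrite E; lra|].
      left; apply exp_increasing; lra. }
    rewrite exp_ln in H2.
    2:{ assert (0 < D/m) by (apply Rdiv_lt_0_compat; lra). lra. }
    assert (m * (D/m+1) <= m * exp (a*tL)) by nra.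
    replace (m * (D/m+1)) with (D + m) in H3 by (field; lra).
    pose proof (exp_pos tL). nra. }
  set (tR := Rmax (ts + 1) (ln (D/c + 1))).
  assert (HtR : ts < tR) by (unfold tR; pose proof (Rmax_l (ts+1) (ln (D/c+1))); lra).
  assert (HhR : 0 < h tR).
  { unfold h, hh. assert (ln (D/c+1) <= tR) by apply Rmax_r.
    assert (exp (ln (D/c+1)) <= exp tR).
    { destruct (Req_dec (ln (D/c+1)) tR) as [E|E]; [rewrite E; lra|].
      left; apply exp_increasing; lra. }
    rewrite exp_ln in H2.
    2:{ assert (0 < D/c) by (apply Rdiv_lt_0_compat; lra). lra. }
    assert (c * (D/c+1) <= c * exp tR) by nra.
    replace (c * (D/c+1)) with (D + c) in H3 by (field; lra).
    pose proof (exp_pos (a*tR)). nra. }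
  assert (Hhts : h ts < 0).
  { assert (h ts < h tO) by (apply Hdec; lra). unfold h in *; lra. }
  destruct (IVT_cor h tL tO (hh_cont m c D a) ltac:(lra) ltac:(unfold h in *; nra)) as [t1 [Ht1 Ht1']].
  destruct (IVT_cor h ts tR (hh_cont m c D a) ltac:(lra) ltac:(nra)) as [t2 [Ht2 Ht2']].
  assert (t2 <> ts) by (intro E; rewrite E in Ht2'; lra).
  exists t1, t2. split; [lra|]. split; [exact Ht1'|]. split; [exact Ht2'|].
  intros t Ht. fold h in Ht.
  destruct (Rle_lt_dec t ts) as [Hl|Hl].
  - left. destruct (Rtotal_order t t1) as [E|[E|E]]; auto.
    + assert (h t1 < h t) by (apply Hdec; lra). lra.
    + assert (h t < h t1) by (apply Hdec; lra). lra.
  - right. destruct (Rtotal_order t t2) as [E|[E|E]]; auto.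
    + assert (h t < h t2) by (apply Hinc; lra). lra.
    + assert (h t2 < h t) by (apply Hinc; lra). lra.
Qed.

Lemma roots_sign (mu sigma r a b : R) : 0 < sigma -> 0 < r -> r > mu ->
  charq mu sigma r a = 0 -> charq mu sigma r b = 0 -> a < b -> a < 0 /\ 1 < b.
Proof.
  intros Hs Hr Hm Ha Hb Hab. unfold charq in *.
  set (s := /2 * sigma^2) in *.
  assert (Hs0 : 0 < s) by (unfold s; nra).
  assert (E : (a - b) * (- mu - s*(a+b) + s) = 0) by (rewrite <- Ha at 1; nra).
  apply Rmult_integral in E. destruct E as [E|E]; [lra|].
  assert (Hmu : mu = s*(1-a-b)) by lra. subst mu.
  assert (r + s*a*b = 0) by nra.
  assert (a*b < 0) by nra.
  assert (a < 0) by nra.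
  assert ((1-a)*(1-b) < 0) by nra. split; nra.
Qed.

Theorem lemma5p7 (mu sigma r C KI KO delta lam1 lam2 : R) :
  0 < sigma -> 0 < r -> 0 <= delta ->
  charq mu sigma r lam1 = 0 -> charq mu sigma r lam2 = 0 -> lam1 < lam2 ->
  r > mu -> C - r * KO > 0 -> C + r * KI > 0 -> KI + KO >= 0 ->
  exists p1 p2 : R,
    0 < p1 /\ 0 < p2 /\ p1 <> p2 /\
    eqF mu r C KI KO delta lam1 lam2 p1 = 0 /\
    eqF mu r C KI KO delta lam1 lam2 p2 = 0 /\
    (forall p, 0 < p -> eqF mu r C KI KO delta lam1 lam2 p = 0 -> p = p1 \/ p = p2) /\
    p1 <= pO mu r C KO delta lam1 /\ p2 > pO mu r C KO delta lam1 /\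
    lam1 * Acoef mu r C KO delta lam1 * Rpower p2 (lam1 - 1)
      + exp ((mu - r) * delta) / (r - mu) > 0.
Proof.
  intros Hs Hr Hd Ha Hb Hab Hrm HO HI HIO.
  destruct (roots_sign mu sigma r lam1 lam2 Hs Hr Hrm Ha Hb Hab) as [Ha0 Hb1].
  set (a := lam1) in *. set (b := lam2) in *.
  set (P := pO mu r C KO delta a). set (A := Acoef mu r C KO delta a).
  set (E := exp ((mu - r) * delta)). set (X := exp (- mu * delta)).
  assert (HE : 0 < E) by apply exp_pos. assert (HX : 0 < X) by apply exp_pos.
  assert (HrE : exp (- r * delta) = E * X).
  { unfold E, X. rewrite <- exp_plus. f_equal. ring. }
  assert (HCr : 0 < C / r - KO).
  { replace (C / r - KO) with ((C - r*KO)/r) by (field; lra). apply Rdiv_lt_0_compat; lra. }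
  assert (HCI : 0 < C / r + KI).
  { replace (C / r + KI) with ((C + r*KI)/r) by (field; lra). apply Rdiv_lt_0_compat; lra. }
  assert (Haa : 0 < a / (a - 1)).
  { replace (a/(a-1)) with ((-a)/(1-a)) by (field; lra). apply Rdiv_lt_0_compat; lra. }
  assert (HP : 0 < P).
  { unfold P, pO. fold X. apply Rmult_lt_0_compat; [|lra].
    apply Rmult_lt_0_compat; [|lra]. apply Rmult_lt_0_compat; lra. }
  assert (HPp : forall y, 0 < Rpower P y) by (intro; unfold Rpower; apply exp_pos).
  assert (HA : A = E * Rpower P (1 - a) / (a * (mu - r))) by reflexivity.
  assert (HA0 : 0 < A).
  { rewrite HA. apply Rdiv_lt_0_compat. pose proof (HPp (1-a)). nra. nra. }
  assert (HAPa : A * Rpower P a = E * P / (a * (mu - r))).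
  { rewrite HA. replace (E * Rpower P (1 - a) / (a * (mu - r)) * Rpower P a)
      with (E * (Rpower P (1 - a) * Rpower P a) / (a * (mu - r))) by (field; nra).
    rewrite <- Rpower_plus. replace (1 - a + a) with 1 by ring. rewrite Rpower_1; auto. }
  assert (HAPa1 : A * Rpower P (a - 1) = E / (a * (mu - r))).
  { rewrite HA. replace (E * Rpower P (1 - a) / (a * (mu - r)) * Rpower P (a-1))
      with (E * (Rpower P (1 - a) * Rpower P (a-1)) / (a * (mu - r))) by (field; nra).
    rewrite <- Rpower_plus. replace (1 - a + (a-1)) with 0 by ring. rewrite Rpower_O; auto. field; nra. }
  set (m := A * (b - a)). set (c := E / (r - mu) * (b - 1)).
  set (D := b * exp (- r * delta) * (C / r + KI)).
  assert (Hm : 0 < m) by (unfold m; nra).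
  assert (Hc : 0 < c) by (unfold c; apply Rmult_lt_0_compat; [apply Rdiv_lt_0_compat|]; lra).
  assert (HD : 0 < D) by (unfold D; rewrite HrE; apply Rmult_lt_0_compat; [|lra];
     apply Rmult_lt_0_compat; [lra|]; nra).
  assert (HF : forall p, 0 < p -> eqF mu r C KI KO delta a b p = hh m c D a (ln p)).
  { intros p Hp. unfold eqF, hh. fold A E. rewrite exp_ln by auto.
    unfold Rpower, m, c, D. ring. }
  assert (HP2 : P = X * (a / (a-1)) * (r - mu) * (C / r - KO)) by reflexivity.
  assert (H0 : hh m c D a (ln P) <= 0).
  { rewrite <- HF; auto. unfold eqF. fold A E.
    replace (A * (b - a) * Rpower P a) with (A * Rpower P a * (b - a)) by ring.
    rewrite HAPa, HrE. rewrite HP2. 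
    replace (E * (X * (a / (a - 1)) * (r - mu) * (C / r - KO)) / (a * (mu - r)) * (b - a) +
      E / (r - mu) * (b - 1) * (X * (a / (a - 1)) * (r - mu) * (C / r - KO)) -
      b * (E * X) * (C / r + KI)) with (- b * (E * X) * (KI + KO)) by (field; repeat split; lra).
    assert (0 <= b * (E*X) * (KI+KO)).
    { apply Rmult_le_pos; [|lra]. apply Rmult_le_pos; [lra|]. nra. }
    lra. }
  assert (H1 : m * a * exp ((a-1) * ln P) + c < 0).
  { change (exp ((a-1) * ln P)) with (Rpower P (a-1)).
    replace (m * a * Rpower P (a-1)) with ((b-a)*a*(A * Rpower P (a-1))) by (unfold m; ring).
    rewrite HAPa1. unfold c.
    replace ((b - a) * a * (E / (a * (mu - r))) + E / (r - mu) * (b - 1))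
      with (E * (a - 1) / (r - mu)) by (field; lra).
    assert (0 < E * (1 - a) / (r - mu)) by (apply Rdiv_lt_0_compat; nra).
    replace (E * (a - 1) / (r - mu)) with (- (E * (1 - a) / (r - mu))) by (field; lra). lra. }
  destruct (gen m c D a (ln P) Ha0 Hm Hc HD H0 H1) as [t1 [t2 [Ht [E1 [E2 Hu]]]]].
  exists (exp t1), (exp t2).
  split; [apply exp_pos|]. split; [apply exp_pos|].
  split. { intro Q. apply (f_equal ln) in Q. rewrite !ln_exp in Q. lra. }
  split. { rewrite HF by apply exp_pos. rewrite ln_exp. exact E1. }
  split. { rewrite HF by apply exp_pos. rewrite ln_exp. exact E2. }
  split. { intros p Hp Hq. rewrite HF in Hq by auto. destruct (Hu _ Hq) as [Q|Q];
    [left|right]; rewrite <- Q, exp_ln; auto. }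
  split. { rewrite <- (exp_ln P) by auto.
    destruct Ht as [[Q|Q] _]; [left; apply exp_increasing; auto|right; rewrite Q; auto]. }
  split. { unfold Rgt. rewrite <- (exp_ln P) by auto. apply exp_increasing; lra. }
  fold A E.
  assert (Rpower (exp t2) (a - 1) < Rpower P (a-1)).
  { unfold Rpower. rewrite ln_exp. apply exp_increasing. nra. }
  assert (a * A * Rpower P (a-1) < a * A * Rpower (exp t2) (a - 1)).
  { assert (a * A < 0) by nra. nra. }
  replace (a * A * Rpower P (a-1)) with (a * (A * Rpower P (a-1))) in H2 by ring.
  rewrite HAPa1 in H2.
  replace (a * (E / (a * (mu - r)))) with (- (E / (r - mu))) in H2 by (field; lra).
  unfold Rgt. lra.
Qed.
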